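(* Let $W\in C(\overline\Omega)$, let $\Upsilon$ be a compact jet tube, and let $\mathcal Q\subset\overline\Omega\times\mathbb S_{++}(n)$. Then, for every $\epsilon>0$, \[ \mathfrak C^-_{\mathcal Q}(W)\le\omega_F\big(\mathfrak r^-_{\mathcal Q}(W)\big)+\epsilon,\qquad \mathfrak C^+_{\mathcal Q}(W)\le\omega_F\big(\mathfrak r^+_{\mathcal Q}(W)\big)+\epsilon, \] where the coverage radii $\mathfrak r^\pm_{\mathcal Q}(W)$ are defined with this $\epsilon$.
   Context: Let $\Omega\subset\mathbb{R}^n$ be bounded open, $U\subset\mathbb{R}^m$ compact, $\beta\ge0$, and $f,\Sigma,\ell$ continuous on $\overline\Omega\times U$ (values in $\mathbb{R}^n$, $\mathbb{R}^{n\times n}$, $\mathbb{R}$); $a=\Sigma\Sigma^\top$; $F(x,r,p,A)=\beta r-\inf_{c\in U}\{\ell(x,c)+p^\top f(x,c)+\tfrac12\operatorname{tr}(a(x,c)A)\}$, a continuous function. $\mathbb S(n)$, $\mathbb S_{++}(n)$: symmetric and positive definite symmetric matrices. Jet tube: $\Upsilon\subset\overline\Omega\times\mathbb{R}\times\mathbb{R}^n\times\mathbb S(n)$ compact. For $Y=(\zeta,r,p,A)$, $\hat Y=(\hat\zeta,\hat r,\hat p,\hat A)$ let $d(Y,\hat Y)=|\zeta-\hat\zeta|+|r-\hat r|+\|p-\hat p\|+\|A-\hat A\|_F$. Let $\omega_F$ be a nondecreasing right-continuous modulus with $|F(Y)-F(\hat Y)|\le\omega_F(d(Y,\hat Y))$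 for all $Y,\hat Y\in\Upsilon$, and $\omega_F(+\infty)=+\infty$. Jets: for $\zeta\in\Omega$, $J^{2,-}W(\zeta)$ (resp. $J^{2,+}W(\zeta)$) is the set of $(p,A)\in\mathbb{R}^n\times\mathbb S(n)$ with $W(y)\ge$ (resp. $\le$) $W(\zeta)+p\cdot(y-\zeta)+\tfrac12(y-\zeta)^\top A(y-\zeta)+o(\|y-\zeta\|^2)$ as $y\to\zeta$. Full families: $\mathfrak J^\mp(W)=\{(\zeta,W(\zeta),p,A):\zeta\in\Omega,(p,A)\in J^{2,\mp}W(\zeta)\}$, keeping only data lying in $\Upsilon$. Envelope families: for $(x,M)\in\mathcal Q$ fix a selection $\zeta_x\in\arg\min_{\zeta\in\overline\Omega}\{W(\zeta)+\tfrac12(x-\zeta)^\top M(x-\zeta)\}$ and $\zeta^\star_x\in\arg\max_{\zeta\in\overline\Omega}\{W(\zeta)-\tfrac12(x-\zeta)^\top M(x-\zeta)\}$; $\mathfrak S^-_{\mathcal Q}(W)=\{(\zeta_x,W(\zeta_x),M(x-\zeta_x),-M):(x,M)\in\mathcal Q,\zeta_x\in\Omega\}$ and $\mathfrak S^+_{\mathcal Q}(W)=\{(\zeta^\star_x,W(\zeta^\star_x),-M(x-\zeta^\star_x),M):(x,M)\in\mathcal Q,\zeta^\star_x\in\Omega\}$, again keeping only data lying in $\Upsilon$. Residuals (with $\sup\emptyset=0$): $\mathfrak R^-_{\rm CL}(W)=\sup_{Y\in\mathfrak J^-(W)}\max\{-F(Y),0\}$, $\mathfrak R^+_{\rm CL}(W)=\sup_{Y\in\mathfrak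 J^+(W)}\max\{F(Y),0\}$, and $\mathfrak R^\mp_{\mathcal Q}(W)$ the same suprema over $\mathfrak S^\mp_{\mathcal Q}(W)$. Completion errors: $\mathfrak C^\pm_{\mathcal Q}(W)=\mathfrak R^\pm_{\rm CL}(W)-\mathfrak R^\pm_{\mathcal Q}(W)$. Active sets for $\epsilon>0$: $\mathfrak A^-(W)=\{Y\in\mathfrak J^-(W):\max\{-F(Y),0\}\ge\mathfrak R^-_{\rm CL}(W)-\epsilon\}$, $\mathfrak A^+(W)=\{Y\in\mathfrak J^+(W):\max\{F(Y),0\}\ge\mathfrak R^+_{\rm CL}(W)-\epsilon\}$. Coverage radii: $\mathfrak r^\pm_{\mathcal Q}(W)=\sup_{Y\in\mathfrak A^\pm(W)}\inf_{\hat Y\in\mathfrak S^\pm_{\mathcal Q}(W)}d(Y,\hat Y)$, with $\sup\emptyset=0$ and $\inf\emptyset=+\infty$. *)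

(* Defs.v *)
From HB Require Import structures.
From mathcomp Require Import all_boot all_order all_algebra.
From mathcomp Require Import all_classical all_reals all_analysis.
Set Implicit Arguments. Unset Strict Implicit. Unset Printing Implicit Defensive.
Import Order.TTheory GRing.Theory Num.Theory.
Import numFieldNormedType.Exports.
Local Open Scope classical_set_scope.
Local Open Scope ring_scope.

Section Defs.
Variable R : realType.
Variables n m : nat.

Definition dotv (u v : 'rV[R]_n) : R := \sum_(i < n) u ord0 i * v ord0 i.
Definition enorm (v : 'rV[R]_n) : R := Num.sqrt (dotv v v).
Definition frob (A : 'M[R]_n) : R := Num.sqrt (\sum_(i < n) \sum_(j < n) A i j ^+ 2).
Definition qform (A : 'M[R]_n) (v : 'rV[R]_n) : R := (v *m A *m v^T) ord0 ord0.

Definition symm_mx (A : 'M[R]_n) : Prop := A^T = A.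
Definition posdef (A : 'M[R]_n) : Prop :=
  symm_mx A /\ forall v : 'rV[R]_n, v != 0 -> 0 < qform A v.

(* jet data Y = (zeta, r, p, A), stored as nested pairs (((zeta, r), p), A) *)
Definition jet := ('rV[R]_n * R * 'rV[R]_n * 'M[R]_n)%type.
Definition jz (Y : jet) : 'rV[R]_n := Y.1.1.1.
Definition jr (Y : jet) : R := Y.1.1.2.
Definition jp (Y : jet) : 'rV[R]_n := Y.1.2.
Definition jA (Y : jet) : 'M[R]_n := Y.2.
Definition mkjet (z : 'rV[R]_n) (r : R) (p : 'rV[R]_n) (A : 'M[R]_n) : jet :=
  (z, r, p, A).

Definition jdist (Y Yh : jet) : R :=
  enorm (jz Y - jz Yh) + `|jr Y - jr Yh| + enorm (jp Y - jp Yh) + frob (jA Y - jA Yh).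

Definition Ham (beta : R) (f : 'rV[R]_n -> 'rV[R]_m -> 'rV[R]_n)
  (Sig : 'rV[R]_n -> 'rV[R]_m -> 'M[R]_n) (l : 'rV[R]_n -> 'rV[R]_m -> R)
  (U : set 'rV[R]_m) (Y : jet) : R :=
  beta * jr Y -
  inf [set l (jz Y) c + dotv (jp Y) (f (jz Y) c)
           + 2^-1 * \tr ((Sig (jz Y) c *m (Sig (jz Y) c)^T) *m jA Y) | c in U].

Definition subjet (W : 'rV[R]_n -> R) (z p : 'rV[R]_n) (A : 'M[R]_n) : Prop :=
  symm_mx A /\
  forall e : R, 0 < e -> exists2 d : R, 0 < d & forall y : 'rV[R]_n,
    enorm (y - z) < d ->
    W z + dotv p (y - z) + 2^-1 * qform A (y - z) - e * enorm (y - z) ^+ 2 <= W y.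
Definition superjet (W : 'rV[R]_n -> R) (z p : 'rV[R]_n) (A : 'M[R]_n) : Prop :=
  symm_mx A /\
  forall e : R, 0 < e -> exists2 d : R, 0 < d & forall y : 'rV[R]_n,
    enorm (y - z) < d ->
    W y <= W z + dotv p (y - z) + 2^-1 * qform A (y - z) + e * enorm (y - z) ^+ 2.

Definition Jminus (Om : set 'rV[R]_n) (Ups : set jet) (W : 'rV[R]_n -> R) : set jet :=
  [set Y | Ups Y /\ exists z p A, [/\ Om z, subjet W z p A & Y = mkjet z (W z) p A]].
Definition Jplus (Om : set 'rV[R]_n) (Ups : set jet) (W : 'rV[R]_n -> R) : set jet :=
  [set Y | Ups Y /\ exists z p A, [/\ Om z, superjet W z p A & Y = mkjet z (W z) p A]].

Definition Mapp (M : 'M[R]_n) (v : 'rV[R]_n) : 'rV[R]_n := (M *m v^T)^T.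

(* envelope families, built from fixed selections zsel (argmin) and zsel' (argmax) *)
Definition Sminus (Om : set 'rV[R]_n) (Ups : set jet) (W : 'rV[R]_n -> R)
  (Q : set ('rV[R]_n * 'M[R]_n)) (zsel : 'rV[R]_n -> 'M[R]_n -> 'rV[R]_n) : set jet :=
  [set Y | Ups Y /\ exists x M, [/\ Q (x, M), Om (zsel x M) &
       Y = mkjet (zsel x M) (W (zsel x M)) (Mapp M (x - zsel x M)) (- M)]].
Definition Splus (Om : set 'rV[R]_n) (Ups : set jet) (W : 'rV[R]_n -> R)
  (Q : set ('rV[R]_n * 'M[R]_n)) (zsel' : 'rV[R]_n -> 'M[R]_n -> 'rV[R]_n) : set jet :=
  [set Y | Ups Y /\ exists x M, [/\ Q (x, M), Om (zsel' x M) &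
       Y = mkjet (zsel' x M) (W (zsel' x M)) (- Mapp M (x - zsel' x M)) M]].

Local Open Scope ereal_scope.

(* sup over a family of nonnegative values with the convention sup(empty) = 0 *)
Definition sup0 (S : set (\bar R)) : \bar R := ereal_sup ([set 0] `|` S).

Definition resid_minus (Fh : jet -> R) (Fam : set jet) : \bar R :=
  sup0 [set (Num.max (- Fh Y) 0)%R%:E | Y in Fam].
Definition resid_plus (Fh : jet -> R) (Fam : set jet) : \bar R :=
  sup0 [set (Num.max (Fh Y) 0)%R%:E | Y in Fam].

Definition active_minus (Fh : jet -> R) (Fam : set jet) (eps : R) : set jet :=
  [set Y | Fam Y /\ resid_minus Fh Fam - eps%:E <= (Num.max (- Fh Y) 0)%R%:E].
Definition active_plus (Fh : jet -> R) (Fam : set jet) (eps : R) : set jet :=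
  [set Y | Fam Y /\ resid_plus Fh Fam - eps%:E <= (Num.max (Fh Y) 0)%R%:E].

(* coverage radius: sup_{Y in Act} inf_{Yh in Env} d(Y,Yh), sup empty = 0, inf empty = +oo *)
Definition coverage (Act Env : set jet) : \bar R :=
  sup0 [set ereal_inf [set (jdist Y Yh)%:E | Yh in Env] | Y in Act].

Definition ext_modulus (om : R -> R) (x : \bar R) : \bar R :=
  match x with
  | EFin r => (om r)%:E
  | +oo => +oo
  | -oo => -oo
  end.

End Defs.

(* Main.v *)
Require Import Defs.
From HB Require Import structures.
From mathcomp Require Import all_boot all_order all_algebra.
From mathcomp Require Import all_classical all_reals all_analysis.
From mathcomp Require Import lra.
Import Order.TTheory GRing.Theory Num.Theory.
Import numFieldNormedType.Exports.
Set Implicit Arguments. Unset Strict Implicit. Unset Printing Implicit Defensive.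
Local Open Scope classical_set_scope.
Local Open Scope ring_scope.

Lemma entry_le (R : realType) p q (A : 'M[R]_(p,q)) i j : `|A i j| <= `|A|.
Proof.
have -> : `|A| = mx_norm A by [].
rewrite mx_normrE.
exact: (le_bigmax _ (fun ij : 'I_p * 'I_q => `|A ij.1 ij.2|) (i,j)).
Qed.

Lemma entry_sq (R : realType) p q (A : 'M[R]_(p,q)) i j : A i j * A i j <= `|A| ^+ 2.
Proof.
have h := entry_le A i j.
have h0 : 0 <= `|A i j| by [].
have e : A i j * A i j = `|A i j| * `|A i j| by rewrite -!expr2 real_normK ?num_real.
rewrite e expr2; nra.
Qed.

Lemma enorm_le (R : realType) n (v : 'rV[R]_n) : enorm v <= Num.sqrt (n%:R * `|v| ^+ 2).
Proof.
rewrite /enorm /dotv ler_sqrt; last by rewrite mulr_ge0.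
apply: le_trans (ler_sum _ (fun i _ => entry_sq v ord0 i)) _.
by rewrite sumr_const card_ord mulr_natl.
Qed.

Lemma frob_le (R : realType) n (v : 'M[R]_n) : frob v <= Num.sqrt (n%:R * (n%:R * `|v| ^+ 2)).
Proof.
rewrite /frob ler_sqrt; last by rewrite !mulr_ge0.
apply: (@le_trans _ _ (\sum_(i < n) \sum_(j < n) `|v| ^+ 2)).
  apply: ler_sum => i _; apply: ler_sum => j _.
  by rewrite expr2 entry_sq.
by rewrite !sumr_const card_ord !mulr_natl.
Qed.

Lemma fst_le (R : realType) (U V : normedZmodType R) (x : U * V) : `|x.1| <= `|x|.
Proof. by rewrite prod_normE le_max lexx. Qed.
Lemma snd_le (R : realType) (U V : normedZmodType R) (x : U * V) : `|x.2| <= `|x|.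
Proof. by rewrite prod_normE le_max lexx orbT. Qed.

Lemma diff_le (R : realType) (V : normedZmodType R) (a b : V) B :
  `|a| <= B -> `|b| <= B -> `|a - b| <= 2 * B.
Proof. move=> ha hb; apply: le_trans (ler_normB a b) _; lra. Qed.

Lemma sq_mono (R : realType) (c t s : R) : 0 <= c -> 0 <= t -> t <= s ->
  Num.sqrt (c * t ^+ 2) <= Num.sqrt (c * s ^+ 2).
Proof.
move=> hc ht hs; rewrite ler_sqrt; last by rewrite mulr_ge0 // ?sqr_ge0.
apply: ler_wpM2l => //; rewrite !expr2; nra.
Qed.

Definition Kb (R : realType) (n : nat) (B : R) : R :=
  Num.sqrt (n%:R * (2 * B) ^+ 2) + `|2 * B| + Num.sqrt (n%:R * (2 * B) ^+ 2)
  + Num.sqrt (n%:R * (n%:R * (2 * B) ^+ 2)).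

Lemma jdist_bound (R : realType) n (Y Y0 : jet R n) B :
  `|Y| <= B -> `|Y0| <= B -> jdist Y Y0 <= Kb n B.
Proof.
move=> hY hY0.
have l1 : forall (Z : jet R n), `|Z| <= B -> `|jz Z| <= B.
  move=> Z hZ; rewrite /jz; apply: le_trans (fst_le _) _; apply: le_trans (fst_le _) _.
  by apply: le_trans (fst_le _) _.
have l2 : forall (Z : jet R n), `|Z| <= B -> `|jr Z| <= B.
  move=> Z hZ; rewrite /jr; apply: le_trans (snd_le _) _; apply: le_trans (fst_le _) _.
  by apply: le_trans (fst_le _) _.
have l3 : forall (Z : jet R n), `|Z| <= B -> `|jp Z| <= B.
  move=> Z hZ; rewrite /jp; apply: le_trans (snd_le _) _.
  by apply: le_trans (fst_le _) _.
have l4 : forall (Z : jet R n), `|Z| <= B -> `|jA Z| <= B.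
  by move=> Z hZ; rewrite /jA; apply: le_trans (snd_le _) _.
rewrite /jdist /Kb.
apply: lerD; [apply: lerD; [apply: lerD|]|].
- apply: le_trans (enorm_le _) _; apply: sq_mono => //.
  exact: diff_le (l1 _ hY) (l1 _ hY0).
- apply: le_trans (ler_norm _).
  exact: diff_le (l2 _ hY) (l2 _ hY0).
- apply: le_trans (enorm_le _) _; apply: sq_mono => //.
  exact: diff_le (l3 _ hY) (l3 _ hY0).
- apply: le_trans (frob_le _) _.
  rewrite ler_sqrt; first last.
    by apply: mulr_ge0 => //; apply: mulr_ge0 => //; exact: sqr_ge0.
  have h := diff_le (l4 _ hY) (l4 _ hY0).
  have h0 : 0 <= `|jA Y - jA Y0| by [].
  have hn : 0 <= n%:R :> R by [].
  have h2 : `|jA Y - jA Y0| ^+ 2 <= (2 * B) ^+ 2 by rewrite !expr2; nra.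
  apply: ler_pM; rewrite ?lexx ?mulr_ge0 ?sqr_ge0 //.
  apply: ler_pM; rewrite ?lexx ?mulr_ge0 ?sqr_ge0 //.
Qed.

Lemma jdist_ge0 (R : realType) n (Y Y0 : jet R n) : 0 <= jdist Y Y0.
Proof.
by rewrite /jdist /enorm /frob !addr_ge0 ?sqrtr_ge0.
Qed.
Lemma sup0_ge0 (R : realType) (S : set (\bar R)) : (0 <= Defs.sup0 S)%E.
Proof. by apply: ereal_sup_ubound; left. Qed.

Lemma abstractC (R : realType) (T : Type) (g : T -> R) (d : T -> T -> R) (om : R -> R)
  (Fam Env : set T) (eps B : R) :
  (forall Y, Fam Y -> g Y <= B) ->
  (forall Y, 0 <= g Y) ->
  (forall Y Yh, 0 <= d Y Yh) ->
  (forall Y Yh, Fam Y -> Env Yh -> g Y - g Yh <= om (d Y Yh)) ->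
  (forall r, 0 <= r -> 0 <= om r) ->
  (forall r s, 0 <= r -> r <= s -> om r <= om s) ->
  (forall r, 0 <= r -> om x @[x --> r^'+] --> om r) ->
  0 < eps ->
  (Defs.sup0 [set (g Y)%:E | Y in Fam] - Defs.sup0 [set (g Y)%:E | Y in Env] <=
   ext_modulus om (Defs.sup0 [set ereal_inf [set (d Y Yh)%:E | Yh in Env] | Y in
      [set Y | Fam Y /\ (Defs.sup0 [set (g Y)%:E | Y in Fam] - eps%:E <= (g Y)%:E)%E]])
   + eps%:E)%E.
Proof.
move=> gB g0 d0 gd om0 omM omC e0.
set Rc := Defs.sup0 [set (g Y)%:E | Y in Fam].
set Rq := Defs.sup0 [set (g Y)%:E | Y in Env].
set cov := Defs.sup0 _.
have Rc0 : (0 <= Rc)%E by apply: sup0_ge0.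
have RcB : (Rc <= (Num.max B 0)%:E)%E.
  apply: ge_ereal_sup => _ [->|[Y FY <-]]; rewrite lee_fin le_max ?lexx ?orbT //.
  by rewrite gB.
have Rq0 : (0 <= Rq)%E by apply: sup0_ge0.
have cov0 : (0 <= cov)%E by apply: sup0_ge0.
have key : forall Y, Fam Y -> (Rc - eps%:E <= (g Y)%:E)%E ->
    (ereal_inf [set (d Y Yh)%:E | Yh in Env] <= cov)%E.
  by move=> Y FY HY; apply: ereal_sup_ubound; right; exists Y.
have Rqg : forall Yh, Env Yh -> ((g Yh)%:E <= Rq)%E.
  by move=> Yh EYh; apply: ereal_sup_ubound; right; exists Yh.
have supP : forall x, (x < Rc)%E -> (x < 0)%E \/ exists2 Y, Fam Y & (x < (g Y)%:E)%E.
  move=> x /ereal_sup_gt [y [->|[Y FY <-]] xy]; first by left.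
  by right; exists Y.
clearbody cov Rq Rc.
have [c Rcc] : exists c : R, Rc = c%:E.
  have : Rc \is a fin_num by rewrite ge0_fin_numE // (le_lt_trans RcB) ?ltey.
  by move/fineK => <-; exists (fine Rc).
move: Rq0 Rqg; case: Rq => [q||] // Rq0 Rqg; last first.
  by rewrite /= addeNy leNye.
move: cov0 key; case: cov => [r||] // cov0 key; last first.
  by rewrite /= addye ?leey.
rewrite lee_fin in Rq0; rewrite lee_fin in cov0.
rewrite Rcc /= -EFinB -EFinD lee_fin.
rewrite Rcc in key supP RcB Rc0.
have omr0 := om0 r cov0.
have [ce|ce] := ltP c eps; first lra.
have hce : ((c - eps)%:E < c%:E)%E by rewrite lte_fin; lra.
have [|[Y FY HY]] := supP (c - eps)%:E hce.
  by rewrite lte_fin; lra.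
rewrite lte_fin in HY.
have kY := key Y FY (ltac:(by rewrite -EFinB lee_fin ltW)).
have claim : forall dl, 0 < dl -> c - q - eps <= om (r + dl).
  move=> dl dl0.
  have : (ereal_inf [set (d Y Yh)%:E | Yh in Env] < (r + dl)%:E)%E.
    by apply: le_lt_trans kY _; rewrite lte_fin; lra.
  move/ereal_inf_lt => [_ [Yh EYh <-] hlt]; rewrite lte_fin in hlt.
  have := gd Y Yh FY EYh.
  have := omM (d Y Yh) (r + dl) (d0 _ _) (ltW hlt).
  have := Rqg Yh EYh; rewrite lee_fin.
  lra.
have [//|hlt] := leP (c - q) (om r + eps).
have epos : 0 < c - q - eps - om r by lra.
have H : \forall t \near r^'+, `|om r - om t| < c - q - eps - om r.
  by apply: cvgr_dist_lt => //; exact: omC.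
have [x [rx hx]] := filter_ex (filterI (nbhs_right_gt r) H).
have := claim (x - r) (ltac:(by rewrite subr_gt0)).
have -> : r + (x - r) = x by rewrite addrC subrK.
move=> hc.
have := ler_norm (om x - om r); rewrite distrC => hn.
move: hx; rewrite /= => hx.
lra.
Qed.

Lemma maxdiff (R : realType) (a b : R) : Num.max a 0 - Num.max b 0 <= `|a - b|.
Proof.
have h1 := ler_norm (a - b).
have h2 : b - a <= `|a - b| by rewrite distrC ler_norm.
have [ha|ha] := leP a 0; have [hb|hb] := leP b 0;
  rewrite ?(max_r ha) ?(max_r hb) ?(max_l (ltW ha)) ?(max_l (ltW hb)); lra.
Qed.

Lemma maxdiffN (R : realType) (a b : R) : Num.max (- a) 0 - Num.max (- b) 0 <= `|a - b|.
Proof.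
have e : `|- a - - b| = `|a - b| by rewrite -opprD normrN.
by rewrite -e maxdiff.
Qed.

Theorem propositionC1 (R : realType) (n m : nat)
  (Om : set 'rV[R]_n) (U : set 'rV[R]_m) (beta : R)
  (f : 'rV[R]_n -> 'rV[R]_m -> 'rV[R]_n) (Sig : 'rV[R]_n -> 'rV[R]_m -> 'M[R]_n)
  (l : 'rV[R]_n -> 'rV[R]_m -> R)
  (W : 'rV[R]_n -> R) (Ups : set (jet R n)) (om : R -> R)
  (Q : set ('rV[R]_n * 'M[R]_n))
  (zsel zsel' : 'rV[R]_n -> 'M[R]_n -> 'rV[R]_n) (eps : R) :
  open Om -> bounded_set Om ->
  compact U -> U !=set0 -> 0 <= beta ->
  {within closure Om `*` U, continuous (fun xc => f xc.1 xc.2)} ->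
  {within closure Om `*` U, continuous (fun xc => Sig xc.1 xc.2)} ->
  {within closure Om `*` U, continuous (fun xc => l xc.1 xc.2)} ->
  {within closure Om, continuous W} ->
  compact Ups ->
  (forall Y, Ups Y -> [/\ closure Om (jz Y) & symm_mx (jA Y)]) ->
  (* omega_F : nonnegative, nondecreasing, right-continuous modulus on [0,oo) *)
  (forall r, 0 <= r -> 0 <= om r) ->
  (forall r s, 0 <= r -> r <= s -> om r <= om s) ->
  (forall r, 0 <= r -> om x @[x --> r^'+] --> om r) ->
  (forall Y Yh, Ups Y -> Ups Yh ->
     `|Ham beta f Sig l U Y - Ham beta f Sig l U Yh| <= om (jdist Y Yh)) ->
  (* Q subset of closure(Om) x S_++(n) *)
  (forall x M, Q (x, M) -> closure Om x /\ posdef M) ->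
  (* fixed argmin / argmax selections *)
  (forall x M, Q (x, M) ->
     closure Om (zsel x M) /\
     forall z, closure Om z ->
       W (zsel x M) + 2^-1 * qform M (x - zsel x M) <= W z + 2^-1 * qform M (x - z)) ->
  (forall x M, Q (x, M) ->
     closure Om (zsel' x M) /\
     forall z, closure Om z ->
       W z - 2^-1 * qform M (x - z) <= W (zsel' x M) - 2^-1 * qform M (x - zsel' x M)) ->
  0 < eps ->
  let Fh := Ham beta f Sig l U in
  let Jm := Jminus Om Ups W in
  let Jp := Jplus Om Ups W in
  let Sm := Sminus Om Ups W Q zsel in
  let Sp := Splus Om Ups W Q zsel' in
  ((resid_minus Fh Jm - resid_minus Fh Sm)%E
     <= (ext_modulus om (coverage (active_minus Fh Jm eps) Sm) + eps%:E)%E)%E /\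
  ((resid_plus Fh Jp - resid_plus Fh Sp)%E
     <= (ext_modulus om (coverage (active_plus Fh Jp eps) Sp) + eps%:E)%E)%E.
Proof.
move=> hOm bOm cU U0 b0 cf cS cl cW cUps hUps om0 omM omC hom hQ hz hz' e0.
have [B [B0 FB]] : exists B, 0 <= B /\
    forall Y, Ups Y -> `|Ham beta f Sig l U Y| <= B.
  have [M _ hM] := pinfty_ex_gt0 (compact_bounded cUps).
  have [[Y0 UY0]|Ue] := pselect (Ups !=set0); last first.
    by exists 0; split => // Y UY; exfalso; apply: Ue; exists Y.
  exists (`|Ham beta f Sig l U Y0| + om (Kb n M)).
  have K0 : 0 <= Kb n M := le_trans (jdist_ge0 Y0 Y0) (jdist_bound (hM _ UY0) (hM _ UY0)).
  split; first by rewrite addr_ge0 // om0.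
  move=> Y UY.
  have h1 := hom Y Y0 UY UY0.
  have h2 := omM _ _ (jdist_ge0 Y Y0) (jdist_bound (hM _ UY) (hM _ UY0)).
  have := ler_normD (Ham beta f Sig l U Y - Ham beta f Sig l U Y0) (Ham beta f Sig l U Y0).
  rewrite subrK => h3.
  lra.
move=> Fh Jm Jp Sm Sp.
split.
- apply: (@abstractC R (jet R n) (fun Y => Num.max (- Fh Y) 0) (@jdist R n) om Jm Sm eps B).
  + move=> Y [UY _]; rewrite ge_max B0 andbT.
    by apply: le_trans (FB _ UY); rewrite -normrN ler_norm.
  + by move=> Y; rewrite le_max lexx orbT.
  + exact: jdist_ge0.
  + move=> Y Yh [UY _] [UYh _].
    exact: le_trans (maxdiffN _ _) (hom _ _ UY UYh).
  + exact: om0.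
  + exact: omM.
  + exact: omC.
  + exact: e0.
- apply: (@abstractC R (jet R n) (fun Y => Num.max (Fh Y) 0) (@jdist R n) om Jp Sp eps B).
  + move=> Y [UY _]; rewrite ge_max B0 andbT.
    by apply: le_trans (FB _ UY); rewrite ler_norm.
  + by move=> Y; rewrite le_max lexx orbT.
  + exact: jdist_ge0.
  + move=> Y Yh [UY _] [UYh _].
    exact: le_trans (maxdiff _ _) (hom _ _ UY UYh).
  + exact: om0.
  + exact: omM.
  + exact: omC.
  + exact: e0.
Qed.
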